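(* Let $\rho\in(0,1)$, $\lambda=\frac{1-\rho}{1+\rho}$, and let $x_i(k)$, $i\in\mathbb Z$, $k\ge0$, be real numbers with $|x_i(k)|<M$ for some $M<\infty$. Define $y_i(k)$ for all $i\in\mathbb Z$, $k\ge0$ by $y_i(0)=\lambda x_i(0)$; $y_i(1)=y_i(0)+\rho(y_{i-1}(0)+y_{i+1}(0))+\lambda(x_i(1)-x_i(0))$; $y_i(2)=y_i(1)+\rho(y_{i-1}(1)-y_{i-1}(0))+\rho(y_{i+1}(1)-y_{i+1}(0))-2\rho^2y_i(0)+\lambda(x_i(2)-x_i(1))$; and for $k\ge2$, $y_i(k+1)=y_i(k)+\rho(y_{i-1}(k)-y_{i-1}(k-1))+\rho(y_{i+1}(k)-y_{i+1}(k-1))-\rho^2(y_i(k-1)-y_i(k-2))+\lambda(x_i(k+1)-x_i(k))-\rho^2\lambda(x_i(k-1)-x_i(k-2))$. Then for all $i\in\mathbb Z$ and all $k\ge0$, $$y_i(k)=\frac{1-\rho}{1+\rho}\Big(x_i(k)+\sum_{j=1}^k\rho^j\big(x_{i-j}(k-j)+x_{i+j}(k-j)\big)\Big).$$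
   Context: Sensors indexed by $i\in\mathbb Z$ on a line; at each time $k=0,1,2,\dots$ sensor $i$ takes a (time-varying) measurement $x_i(k)$ and maintains a consensus variable $y_i(k)$; sensor $i$ may use only its own measurements and the consensus variables of sensors $i\pm1$. *)

(* Defs.v *)
From Stdlib Require Import Reals ZArith.
Open Scope R_scope.

Fixpoint sum_1_to (k : nat) (f : nat -> R) : R :=
  match k with
  | O => 0
  | S k' => sum_1_to k' f + f (S k')
  end.

(* Main.v *)
Require Import Defs.
From Stdlib Require Import Reals ZArith Lra Lia.
Open Scope R_scope.

Lemma sum_ext k f g : (forall j, f j = g j) -> sum_1_to k f = sum_1_to k g.
Proof. intros H; induction k; simpl; [reflexivity| rewrite IHk, H; reflexivity]. Qed.

Lemma sum_plus k f g : sum_1_to k (fun j => f j + g j) = sum_1_to k f + sum_1_to k g.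
Proof. induction k; simpl; [ring| rewrite IHk; ring]. Qed.

Lemma sum_scal k c f : sum_1_to k (fun j => c * f j) = c * sum_1_to k f.
Proof. induction k; simpl; [ring| rewrite IHk; ring]. Qed.

Lemma sum_shift k f : sum_1_to (S k) f = f 1%nat + sum_1_to k (fun j => f (S j)).
Proof. induction k; simpl in *; [ring| rewrite IHk; ring]. Qed.

Definition aa (rho : R) (x : Z -> nat -> R) i k :=
  x i k + sum_1_to k (fun j => rho ^ j * x (i - Z.of_nat j)%Z (k - j)%nat).
Definition bb (rho : R) (x : Z -> nat -> R) i k :=
  x i k + sum_1_to k (fun j => rho ^ j * x (i + Z.of_nat j)%Z (k - j)%nat).

Lemma aa_rec rho x i k : aa rho x i (S k) = x i (S k) + rho * aa rho x (i - 1)%Z k.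
Proof.
  unfold aa. rewrite sum_shift.
  replace (sum_1_to k (fun j => rho ^ S j * x (i - Z.of_nat (S j))%Z (S k - S j)%nat))
    with (rho * sum_1_to k (fun j => rho ^ j * x (i - 1 - Z.of_nat j)%Z (k - j)%nat)).
  2:{ rewrite <- sum_scal. apply sum_ext. intros j.
      replace (i - Z.of_nat (S j))%Z with (i - 1 - Z.of_nat j)%Z by lia.
      simpl. ring. }
  replace (i - Z.of_nat 1)%Z with (i - 1)%Z by lia.
  replace (S k - 1)%nat with k by lia. simpl. ring.
Qed.

Lemma bb_rec rho x i k : bb rho x i (S k) = x i (S k) + rho * bb rho x (i + 1)%Z k.
Proof.
  unfold bb. rewrite sum_shift.
  replace (sum_1_to k (fun j => rho ^ S j * x (i + Z.of_nat (S j))%Z (S k - S j)%nat))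
    with (rho * sum_1_to k (fun j => rho ^ j * x (i + 1 + Z.of_nat j)%Z (k - j)%nat)).
  2:{ rewrite <- sum_scal. apply sum_ext. intros j.
      replace (i + Z.of_nat (S j))%Z with (i + 1 + Z.of_nat j)%Z by lia.
      simpl. ring. }
  replace (i + Z.of_nat 1)%Z with (i + 1)%Z by lia.
  replace (S k - 1)%nat with k by lia. simpl. ring.
Qed.

Lemma aa0 rho x i : aa rho x i 0 = x i 0%nat.
Proof. unfold aa; simpl; ring. Qed.
Lemma bb0 rho x i : bb rho x i 0 = x i 0%nat.
Proof. unfold bb; simpl; ring. Qed.

Theorem theorem4 (rho M : R) (x y : Z -> nat -> R)
  (Hrho : 0 < rho < 1)
  (HM : forall i k, Rabs (x i k) < M)
  (Hy0 : forall i, y i 0%nat = (1 - rho) / (1 + rho) * x i 0%nat)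
  (Hy1 : forall i, y i 1%nat =
      y i 0%nat + rho * (y (i - 1)%Z 0%nat + y (i + 1)%Z 0%nat)
      + (1 - rho) / (1 + rho) * (x i 1%nat - x i 0%nat))
  (Hy2 : forall i, y i 2%nat =
      y i 1%nat + rho * (y (i - 1)%Z 1%nat - y (i - 1)%Z 0%nat)
      + rho * (y (i + 1)%Z 1%nat - y (i + 1)%Z 0%nat)
      - 2 * rho ^ 2 * y i 0%nat
      + (1 - rho) / (1 + rho) * (x i 2%nat - x i 1%nat))
  (Hyk : forall i (k : nat), (2 <= k)%nat ->
      y i (S k) =
      y i k + rho * (y (i - 1)%Z k - y (i - 1)%Z (k - 1)%nat)
      + rho * (y (i + 1)%Z k - y (i + 1)%Z (k - 1)%nat)
      - rho ^ 2 * (y i (k - 1)%nat - y i (k - 2)%nat)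
      + (1 - rho) / (1 + rho) * (x i (S k) - x i k)
      - rho ^ 2 * ((1 - rho) / (1 + rho)) * (x i (k - 1)%nat - x i (k - 2)%nat)) :
  forall (i : Z) (k : nat),
    y i k = (1 - rho) / (1 + rho) *
      (x i k + sum_1_to k (fun j =>
         rho ^ j * (x (i - Z.of_nat j)%Z (k - j)%nat + x (i + Z.of_nat j)%Z (k - j)%nat))).
Proof.
  set (l := (1 - rho) / (1 + rho)).
  assert (Main : forall n k i, (k <= n)%nat ->
            y i k = l * (aa rho x i k + bb rho x i k - x i k)).
  { induction n as [|n IH]; intros k i Hk.
    - assert (k = 0%nat) by lia; subst. rewrite Hy0, aa0, bb0. fold l. ring.
    - destruct (Nat.le_gt_cases k n) as [Hkn|Hkn]; [apply IH; exact Hkn|].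
      assert (k = S n) by lia; subst k.
      destruct n as [|[|m]].
      + rewrite Hy1. fold l. rewrite !IH by lia.
        rewrite !aa_rec, !bb_rec, !aa0, !bb0. rewrite ?Z.sub_add, ?Z.add_simpl_r. ring.
      + rewrite Hy2. fold l. rewrite !IH by lia.
        rewrite !aa_rec, !bb_rec, !aa0, !bb0. rewrite ?Z.sub_add, ?Z.add_simpl_r. ring.
      + rewrite Hyk by lia. fold l.
        replace (S (S m) - 1)%nat with (S m) by lia.
        replace (S (S m) - 2)%nat with m by lia.
        rewrite !IH by lia.
        rewrite !aa_rec, !bb_rec. rewrite ?Z.sub_add, ?Z.add_simpl_r. ring. }
  intros i k. rewrite (Main k k i) by lia. fold l. f_equal.
  unfold aa, bb.
  replace (sum_1_to k (fun j => rho ^ j * (x (i - Z.of_nat j)%Z (k - j)%nat + x (i + Z.of_nat j)%Z (k - j)%nat)))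
   with (sum_1_to k (fun j => rho ^ j * x (i - Z.of_nat j)%Z (k - j)%nat + rho ^ j * x (i + Z.of_nat j)%Z (k - j)%nat)).
  2:{ apply sum_ext; intros; ring. }
  rewrite sum_plus. ring.
Qed.
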